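(* Let $n\ge 1$. If there is a balanced stack of $n$ blocks of length $1$ and weight $1$ achieving overhang $d$, then there is a sequence of at most $n-1$ lossy moves that transforms some distribution $\mu$ with $M_0[\mu]=\mu\{x\le 0\}=n$ and $\mu\{x>0\}=0$ into a distribution $\mu'$ with $\mu'\{x\ge d-1\}\ge 1$.
   Context: Stacks: the table is $B_0=(-\infty,0]\times(-\infty,0]$; block $B_i$ occupies $[x_i,x_i+1]\times[y_i,y_i+h]$, blocks have disjoint interiors; $B_i$ rests on $B_j$ if they intersect and $y_i=y_j+h$ ($B_i$ rests on the table if $B_i\cap B_0\neq\emptyset$). Supporting blocks (or the table) exert upward vertical forces $\ge0$ at points of the contact segments, with equal opposite reactions; each block has weight $1$ acting at horizontal position $x_i+\frac12$. The stack is balanced if forces can be chosen so that for every block the total force and total moment vanish. Overhang is $\max_i(x_i+1)$. A distribution is a finite set $\{(x_1,m_1),\dots,(x_k,m_k)\}$ with $m_i>0$; signed distributions allow arbitrary real $m_i$; $\mu(A)=\sum_{x_i\in A}m_i$; $M_j[\mu]=\sum_i m_ix_i^j$. A move $([a,b],\delta)$ has $b-a=1$ and $\delta$ a signed distribution on $[a,b]$ with $M_0[\delta]=M_1[\delta]=0$. The associated lossy move is $([a,b],\delta^\downarrow)$ with $\delta^\downarrow=\delta-\{(\frac{a+b}2,1)\}$; it can be applied to $\mu$ if $\mu+\delta^\downarrow$ is a distribution, and its result is $\mu+\delta^\downarrow$. *)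

(* Defs.v *)
From Stdlib Require Import Reals List.
Import ListNotations.
Open Scope R_scope.

(* A stack of n blocks of length 1 and height h > 0: block i (i < n) occupies
   [x i, x i + 1] x [y i, y i + h]. The table is B_0 = (-oo,0] x (-oo,0]. *)

(* Blocks (and the table) have pairwise disjoint interiors. *)
Definition is_stack (h : R) (n : nat) (x y : nat -> R) : Prop :=
  (forall i j, (i < n)%nat -> (j < n)%nat -> i <> j ->
     ~ (Rabs (x i - x j) < 1 /\ Rabs (y i - y j) < h)) /\
  (forall i, (i < n)%nat -> ~ (x i < 0 /\ y i < 0)).

(* A support is either the table (None) or a block (Some j). *)
Definition support := option nat.

Definition rests_on (h : R) (x y : nat -> R) (i : nat) (s : support) : Prop :=
  match s with
  | None => x i <= 0 /\ y i <= 0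
  | Some j => Rabs (x i - x j) <= 1 /\ y i = y j + h
  end.

Definition in_contact (x : nat -> R) (i : nat) (s : support) (p : R) : Prop :=
  x i <= p <= x i + 1 /\
  match s with
  | None => p <= 0
  | Some j => x j <= p <= x j + 1
  end.

(* A point force: the support f_down pushes the block f_up upward with
   magnitude f_mag at horizontal position f_pos (with equal opposite reaction
   on f_down if it is a block). *)
Record force := mkForce { f_up : nat; f_down : support; f_pos : R; f_mag : R }.

Definition sumR (l : list R) : R := fold_right Rplus 0 l.

Definition up_force (fs : list force) (k : nat) : R :=
  sumR (map (fun F => if Nat.eqb (f_up F) k then f_mag F else 0) fs).
Definition down_force (fs : list force) (k : nat) : R :=
  sumR (map (fun F => match f_down F with
                      | Some j => if Nat.eqb j k then f_mag F else 0
                      | None => 0 end) fs).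
Definition up_moment (fs : list force) (k : nat) : R :=
  sumR (map (fun F => if Nat.eqb (f_up F) k then f_mag F * f_pos F else 0) fs).
Definition down_moment (fs : list force) (k : nat) : R :=
  sumR (map (fun F => match f_down F with
                      | Some j => if Nat.eqb j k then f_mag F * f_pos F else 0
                      | None => 0 end) fs).

(* Balanced: forces (finitely many point forces, each >= 0, acting at points
   of contact sets between a block and something it rests on) such that every
   block has zero total force and zero total moment (weight 1 at x_i + 1/2). *)
Definition balanced (h : R) (n : nat) (x y : nat -> R) : Prop :=
  exists fs : list force,
    (forall F, In F fs ->
       (f_up F < n)%nat /\
       match f_down F with Some j => (j < n)%nat | None => True end /\
       rests_on h x y (f_up F) (f_down F) /\
       in_contact x (f_up F) (f_down F) (f_pos F) /\
       0 <= f_mag F) /\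
    (forall k, (k < n)%nat ->
       up_force fs k - down_force fs k - 1 = 0 /\
       up_moment fs k - down_moment fs k - (x k + 1/2) = 0).

Definition is_overhang (n : nat) (x : nat -> R) (d : R) : Prop :=
  (exists i, (i < n)%nat /\ x i + 1 = d) /\
  (forall i, (i < n)%nat -> x i + 1 <= d).

(* A (signed) distribution is a finite list of (position, mass) pairs,
   read as the measure sum_i m_i * delta_{x_i}. *)
Definition meas := list (R * R).

Definition Rleb (a b : R) : bool := if Rle_dec a b then true else false.
Definition Rltb (a b : R) : bool := if Rlt_dec a b then true else false.
Definition Reqb (a b : R) : bool := if Req_EM_T a b then true else false.

Definition mu_of (A : R -> bool) (mu : meas) : R :=
  sumR (map (fun pm => if A (fst pm) then snd pm else 0) mu).

Definition moment (j : nat) (mu : meas) : R :=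
  sumR (map (fun pm => snd pm * (fst pm) ^ j) mu).

(* mu is a (nonnegative) distribution: the net mass at every point is >= 0
   (points of net mass 0 are simply absent from the distribution). *)
Definition is_dist (mu : meas) : Prop :=
  forall p, 0 <= mu_of (fun q => Reqb q p) mu.

Record move := mkMove { mv_a : R; mv_delta : meas }.

Definition valid_move (m : move) : Prop :=
  (forall pm, In pm (mv_delta m) -> mv_a m <= fst pm <= mv_a m + 1) /\
  moment 0 (mv_delta m) = 0 /\ moment 1 (mv_delta m) = 0.

Definition lossy_delta (m : move) : meas :=
  mv_delta m ++ [((mv_a m + (mv_a m + 1)) / 2, -1)].

Fixpoint lossy_seq (ms : list move) (mu mu' : meas) : Prop :=
  match ms with
  | [] => mu' = mu
  | m :: ms' =>
      valid_move m /\ is_dist (mu ++ lossy_delta m) /\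
      lossy_seq ms' (mu ++ lossy_delta m) mu'
  end.

(* Main.v *)
Require Import Defs.
From Stdlib Require Import Reals List Lra Lia Permutation Sorted.
Import ListNotations.
Open Scope R_scope.
Local Open Scope bool_scope.

Lemma sumR_app l1 l2 : sumR (l1 ++ l2) = sumR l1 + sumR l2.
Proof. induction l1; simpl; [lra| rewrite IHl1; lra]. Qed.

Lemma mu_of_app A l1 l2 : mu_of A (l1 ++ l2) = mu_of A l1 + mu_of A l2.
Proof. unfold mu_of. rewrite map_app, sumR_app. reflexivity. Qed.

Lemma sumR_map_plus {T} (f g : T -> R) l :
  sumR (map (fun a => f a + g a) l) = sumR (map f l) + sumR (map g l).
Proof. induction l; simpl; [lra | rewrite IHl; lra]. Qed.

Lemma sumR_map_minus {T} (f g : T -> R) l :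
  sumR (map (fun a => f a - g a) l) = sumR (map f l) - sumR (map g l).
Proof. induction l; simpl; [lra | rewrite IHl; lra]. Qed.

Lemma sumR_map_ext {T} (f g : T -> R) l :
  (forall a, In a l -> f a = g a) -> sumR (map f l) = sumR (map g l).
Proof. induction l; simpl; intros H; [reflexivity|].
  rewrite H by auto. rewrite IHl by auto. reflexivity. Qed.

Lemma sumR_map_le {T} (f g : T -> R) l :
  (forall a, In a l -> f a <= g a) -> sumR (map f l) <= sumR (map g l).
Proof. induction l; simpl; intros H; [lra|].
  specialize (IHl (fun a H' => H a (or_intror H'))).
  specialize (H a (or_introl eq_refl)). lra. Qed.

Lemma sumR_map_zero {T} (l : list T) : sumR (map (fun _ => 0) l) = 0.
Proof. induction l; simpl; [lra | rewrite IHl; lra]. Qed.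

Lemma sumR_map_nonneg {T} (f : T -> R) l :
  (forall a, In a l -> 0 <= f a) -> 0 <= sumR (map f l).
Proof. intros H. rewrite <- (sumR_map_zero l). apply sumR_map_le. auto. Qed.

Fixpoint rsum (f : nat -> R) (n : nat) : R :=
  match n with O => 0 | S m => rsum f m + f m end.

Lemma rsum_exchange {T} (g : nat -> T -> R) n l :
  rsum (fun k => sumR (map (g k) l)) n = sumR (map (fun F => rsum (fun k => g k F) n) l).
Proof. induction n; simpl.
  - rewrite sumR_map_zero. reflexivity.
  - rewrite IHn. rewrite <- sumR_map_plus. reflexivity. Qed.

Lemma rsum_ext f g n : (forall k, (k < n)%nat -> f k = g k) -> rsum f n = rsum g n.
Proof. induction n; simpl; intros H; [reflexivity|].
  rewrite IHn by (intros; apply H; lia). rewrite H by lia. reflexivity. Qed.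

Lemma rsum_minus f g n : rsum (fun k => f k - g k) n = rsum f n - rsum g n.
Proof. induction n; simpl; [lra| rewrite IHn; lra]. Qed.

Lemma rsum_one n : rsum (fun _ => 1) n = INR n.
Proof. induction n; simpl rsum; [simpl; lra| rewrite IHn, S_INR; lra]. Qed.

Lemma rsum_zero u m n : (n <= u)%nat -> rsum (fun k => if Nat.eqb u k then m else 0) n = 0.
Proof. induction n; simpl; intros H; [reflexivity|].
  rewrite IHn by lia. destruct (Nat.eqb u n) eqn:E; [apply Nat.eqb_eq in E; lia| lra]. Qed.

Lemma rsum_ind u m n : (u < n)%nat -> rsum (fun k => if Nat.eqb u k then m else 0) n = m.
Proof. induction n; simpl; intros H; [lia|].
  destruct (Nat.eqb u n) eqn:E.
  - apply Nat.eqb_eq in E. subst. rewrite rsum_zero by lia. lra.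
  - apply Nat.eqb_neq in E. rewrite IHn by lia. lra. Qed.
Definition addS (i : nat) (S : nat -> bool) : nat -> bool := fun j => Nat.eqb j i || S j.
Definition down_in (S : nat -> bool) (F : force) : bool :=
  match f_down F with None => true | Some j => S j end.
Definition cond S F := down_in S F && negb (S (f_up F)).
Definition Dm (fs : list force) S : meas :=
  map (fun F => (f_pos F, if cond S F then f_mag F else 0)) fs.
Definition rel (i : nat) (F : force) : bool :=
  Nat.eqb (f_up F) i || match f_down F with Some j => Nat.eqb j i | None => false end.
Definition dmass (i : nat) F : R :=
  (match f_down F with Some j => if Nat.eqb j i then f_mag F else 0 | None => 0 end)
  - (if Nat.eqb (f_up F) i then f_mag F else 0).
Definition mv (fs : list force) (x : nat -> R) (i : nat) : move :=
  mkMove (x i) (map (fun F => (if rel i F then f_pos F else x i, dmass i F)) fs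
                ++ [(x i + 1/2, 1)]).

Lemma valid_mv fs x i :
  (forall F, In F fs -> in_contact x (f_up F) (f_down F) (f_pos F)) ->
  up_force fs i - down_force fs i - 1 = 0 ->
  up_moment fs i - down_moment fs i - (x i + 1/2) = 0 ->
  valid_move (mv fs x i).
Proof.
  intros Hc H0 H1. unfold valid_move, mv. simpl mv_a. simpl mv_delta.
  split; [|split].
  - intros pm Hin. apply in_app_or in Hin; destruct Hin as [Hin|Hin].
    + apply in_map_iff in Hin; destruct Hin as [F [<- HF]]. simpl fst. unfold rel.
      destruct (Nat.eqb (f_up F) i) eqn:Eu; simpl.
      * apply Nat.eqb_eq in Eu. destruct (Hc F HF) as [H2 _]. rewrite Eu in H2. exact H2.
      * destruct (f_down F) as [j|] eqn:Ed; [destruct (Nat.eqb j i) eqn:Ej|].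
        -- apply Nat.eqb_eq in Ej; subst. destruct (Hc F HF) as [_ H2]. rewrite Ed in H2. exact H2.
        -- lra.
        -- lra.
    + destruct Hin as [<-|[]]; simpl; lra.
  - unfold moment. rewrite map_app, sumR_app, map_map. simpl.
    rewrite (sumR_map_ext _ (fun F => (match f_down F with Some j => if Nat.eqb j i then f_mag F else 0 | None => 0 end)
       - (if Nat.eqb (f_up F) i then f_mag F else 0))).
    + rewrite sumR_map_minus. unfold up_force, down_force in H0. lra.
    + intros F _. unfold dmass. ring.
  - unfold moment. rewrite map_app, sumR_app, map_map. simpl.
    rewrite (sumR_map_ext _ (fun F => (match f_down F with Some j => if Nat.eqb j i then f_mag F * f_pos F else 0 | None => 0 end)
       - (if Nat.eqb (f_up F) i then f_mag F * f_pos F else 0))).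
    + rewrite sumR_map_minus. unfold up_moment, down_moment in H1. lra.
    + intros F _. unfold dmass, rel.
      destruct (Nat.eqb (f_up F) i); destruct (f_down F) as [j|];
        try destruct (Nat.eqb j i); simpl; ring.
Qed.

Lemma mu_of_Dm A fs S :
  mu_of A (Dm fs S) = sumR (map (fun F => if A (f_pos F) then (if cond S F then f_mag F else 0) else 0) fs).
Proof. unfold mu_of, Dm. rewrite map_map. reflexivity. Qed.

Lemma dist_Dm fs S A : (forall F, In F fs -> 0 <= f_mag F) -> 0 <= mu_of A (Dm fs S).
Proof. intros H. rewrite mu_of_Dm. apply sumR_map_nonneg. intros F HF.
  specialize (H F HF). destruct (A (f_pos F)); destruct (cond S F); lra. Qed.

Lemma step fs x i S L A :
  (forall F, In F fs -> f_down F <> Some (f_up F)) ->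
  S i = false ->
  (forall F, In F fs -> f_up F = i -> down_in S F = true) ->
  (forall F, In F fs -> f_down F = Some i -> S (f_up F) = false) ->
  mu_of A L = mu_of A (Dm fs S) ->
  mu_of A (L ++ lossy_delta (mv fs x i)) = mu_of A (Dm fs (addS i S)).
Proof.
  intros Hne HSi Hup Hdn HL.
  unfold lossy_delta, mv. simpl mv_a. simpl mv_delta.
  rewrite !mu_of_app, HL.
  replace ((x i + (x i + 1)) / 2) with (x i + 1/2) by field.
  assert (E : mu_of A (Dm fs (addS i S)) = mu_of A (Dm fs S) +
     mu_of A (map (fun F => (if rel i F then f_pos F else x i, dmass i F)) fs)).
  { rewrite !mu_of_Dm. unfold mu_of. rewrite map_map. rewrite <- sumR_map_plus.
    apply sumR_map_ext. intros F HF. simpl fst. simpl snd.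
    unfold cond, down_in, addS, rel, dmass.
    destruct (Nat.eqb (f_up F) i) eqn:Eu.
    - apply Nat.eqb_eq in Eu.
      assert (Hd := Hup F HF Eu). unfold down_in in Hd.
      assert (Hn := Hne F HF). rewrite Eu in Hn.
      rewrite Eu, HSi. rewrite ?Nat.eqb_refl. simpl.
      destruct (f_down F) as [j|] eqn:Ed.
      + destruct (Nat.eqb j i) eqn:Ej.
        * apply Nat.eqb_eq in Ej. subst. congruence.
        * rewrite Hd. simpl. destruct (A (f_pos F)); lra.
      + simpl. destruct (A (f_pos F)); lra.
    - simpl.
      destruct (f_down F) as [j|] eqn:Ed.
      + destruct (Nat.eqb j i) eqn:Ej.
        * apply Nat.eqb_eq in Ej. subst j. rewrite (Hdn F HF Ed), HSi. simpl.
          destruct (A (f_pos F)); lra.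
        * simpl. destruct (S j && negb (S (f_up F))); destruct (A (f_pos F)); destruct (A (x i)); lra.
      + simpl. destruct (negb (S (f_up F))); destruct (A (f_pos F)); destruct (A (x i)); lra. }
  rewrite E. unfold mu_of at 3 4. simpl. destruct (A (x i + 1/2)); lra.
Qed.

Fixpoint good (fs : list force) (S : nat -> bool) (L : list nat) : Prop :=
  match L with
  | [] => True
  | i :: L' => S i = false /\
      (forall F, In F fs -> f_up F = i -> down_in S F = true) /\
      (forall F, In F fs -> f_down F = Some i -> S (f_up F) = false) /\
      good fs (addS i S) L'
  end.

Fixpoint addall (L : list nat) (S : nat -> bool) :=
  match L with [] => S | i :: L' => addall L' (addS i S) end.

Lemma iterate fs x :
  (forall F, In F fs -> 0 <= f_mag F) ->
  (forall F, In F fs -> f_down F <> Some (f_up F)) ->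
  forall L S mu, good fs S L -> (forall i, In i L -> valid_move (mv fs x i)) ->
  (forall A, mu_of A mu = mu_of A (Dm fs S)) ->
  exists mu', lossy_seq (map (mv fs x) L) mu mu' /\
    forall A, mu_of A mu' = mu_of A (Dm fs (addall L S)).
Proof.
  intros Hpos Hne L. induction L as [|i L IH]; intros S mu Hg Hv Hmu; simpl.
  - exists mu. split; auto.
  - destruct Hg as [H1 [H2 [H3 H4]]].
    assert (Hst : forall A, mu_of A (mu ++ lossy_delta (mv fs x i)) = mu_of A (Dm fs (addS i S))).
    { intros A. apply step; auto. }
    destruct (IH (addS i S) (mu ++ lossy_delta (mv fs x i)) H4) as [mu' [Hs Hm]].
    + intros j Hj. apply Hv. right. exact Hj.
    + exact Hst.
    + exists mu'. split; [|exact Hm]. split; [apply Hv; left; reflexivity|]. split; [|exact Hs].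
      intros p. rewrite Hst. apply dist_Dm. exact Hpos.
Qed.

Fixpoint ins (y : nat -> R) (a : nat) (l : list nat) : list nat :=
  match l with
  | [] => [a]
  | b :: l' => if Rle_dec (y a) (y b) then a :: l else b :: ins y a l'
  end.
Fixpoint isort y l := match l with [] => [] | a :: l' => ins y a (isort y l') end.

Lemma ins_perm y a l : Permutation (a :: l) (ins y a l).
Proof. induction l as [|b l IH]; simpl; [auto|].
  destruct (Rle_dec (y a) (y b)); [auto|].
  eapply perm_trans; [apply perm_swap|]. apply perm_skip. exact IH. Qed.

Lemma isort_perm y l : Permutation l (isort y l).
Proof. induction l; simpl; [auto|]. eapply perm_trans; [apply perm_skip; exact IHl|].
  apply ins_perm. Qed.

Lemma ins_sorted y a l : StronglySorted (fun u v => y u <= y v) l ->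
  StronglySorted (fun u v => y u <= y v) (ins y a l).
Proof. induction l as [|b l IH]; simpl; intros H.
  - constructor; auto.
  - inversion H; subst. destruct (Rle_dec (y a) (y b)).
    + constructor; [exact H|]. constructor; [exact r|].
      rewrite Forall_forall in *. intros c Hc. specialize (H3 c Hc). lra.
    + constructor; [apply IH; exact H2|]. rewrite Forall_forall in *. intros c Hc.
      apply (Permutation_in _ (Permutation_sym (ins_perm y a l))) in Hc.
      destruct Hc as [<-|Hc]; [lra| apply H3; exact Hc].
Qed.

Lemma isort_sorted y l : StronglySorted (fun u v => y u <= y v) (isort y l).
Proof. induction l; simpl; [constructor|]. apply ins_sorted. exact IHl. Qed.

Lemma good_intro fs h x y n : 0 < h ->
  (forall F, In F fs -> (f_up F < n)%nat /\
     match f_down F with Some j => (j < n)%nat | None => True end /\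
     rests_on h x y (f_up F) (f_down F)) ->
  forall L S, NoDup L -> StronglySorted (fun u v => y u <= y v) L ->
  (forall j, In j L -> S j = false) ->
  (forall j i, (j < n)%nat -> In i L -> y j < y i -> S j = true \/ In j L) ->
  (forall u i, S u = true -> In i L -> y u <= y i) ->
  good fs S L.
Proof.
  intros hpos Hfs L. induction L as [|a L IH]; intros S Hnd Hso H2 H3 H4; simpl; [exact I|].
  inversion Hso; subst. rename H5 into Hfa. rewrite Forall_forall in Hfa.
  apply NoDup_cons_iff in Hnd. destruct Hnd as [Hna Hnd].
  split; [|split; [|split]].
  - apply H2. left. reflexivity.
  - intros F HF Eu. destruct (Hfs F HF) as [_ [Hj Hr]]. unfold down_in.
    destruct (f_down F) as [j|] eqn:Ed; [|reflexivity].
    simpl in Hr. destruct Hr as [_ Hy]. rewrite Eu in Hy.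
    destruct (H3 j a Hj (or_introl eq_refl)) as [Hs|[Hs|Hs]]; [lra| | |].
    + exact Hs.
    + subst. lra.
    + specialize (Hfa j Hs). lra.
  - intros F HF Ed. destruct (Hfs F HF) as [_ [_ Hr]]. rewrite Ed in Hr.
    simpl in Hr. destruct Hr as [_ Hy].
    destruct (S (f_up F)) eqn:Es; [|reflexivity].
    specialize (H4 _ a Es (or_introl eq_refl)). lra.
  - apply IH; auto.
    + intros j Hj. unfold addS. destruct (Nat.eqb j a) eqn:E.
      * apply Nat.eqb_eq in E; subst. contradiction.
      * simpl. apply H2. right. exact Hj.
    + intros j i Hj Hi Hy. destruct (H3 j i Hj (or_intror Hi) Hy) as [Hs|[Hs|Hs]].
      * left. unfold addS. rewrite Hs. apply Bool.orb_true_r.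
      * left. subst. unfold addS. rewrite Nat.eqb_refl. reflexivity.
      * right. exact Hs.
    + intros u i Hu Hi. unfold addS in Hu. apply Bool.orb_true_iff in Hu.
      destruct Hu as [Hu|Hu].
      * apply Nat.eqb_eq in Hu. subst. apply Hfa. exact Hi.
      * apply (H4 u i Hu). right. exact Hi.
Qed.

Lemma addall_S L S j : S j = true -> addall L S j = true.
Proof. revert S. induction L; simpl; intros S H; [exact H|]. apply IHL.
  unfold addS. rewrite H. apply Bool.orb_true_r. Qed.

Lemma addall_in L S j : In j L -> addall L S j = true.
Proof. revert S. induction L; simpl; intros S H; [contradiction|].
  destruct H as [<-|H]; [|apply IHL; exact H].
  apply addall_S. unfold addS. rewrite Nat.eqb_refl. reflexivity. Qed.

Lemma addall_notin L S j : ~ In j L -> S j = false -> addall L S j = false.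
Proof. revert S. induction L; simpl; intros S H1 H2; [exact H2|]. apply IHL.
  - intros H. apply H1. right. exact H.
  - unfold addS. rewrite H2. destruct (Nat.eqb j a) eqn:E; [|reflexivity].
    apply Nat.eqb_eq in E. subst. exfalso. apply H1. left. reflexivity. Qed.

Lemma filter_len_le {A} (f : A -> bool) l : (length (filter f l) <= length l)%nat.
Proof. induction l; simpl; [lia|]. destruct (f a); simpl; lia. Qed.

Lemma filter_len_lt {A} (f : A -> bool) l a : In a l -> f a = false ->
  (length (filter f l) < length l)%nat.
Proof. induction l as [|b l IH]; simpl; intros H1 H2; [contradiction|].
  destruct H1 as [<-|H1].
  - rewrite H2. pose proof (filter_len_le f l). lia.
  - destruct (f b); simpl; [specialize (IH H1 H2); lia|]. pose proof (filter_len_le f l). lia.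
Qed.

Lemma table_total fs n :
  (forall F, In F fs -> (f_up F < n)%nat /\
     match f_down F with Some j => (j < n)%nat | None => True end) ->
  (forall k, (k < n)%nat -> up_force fs k - down_force fs k - 1 = 0) ->
  sumR (map (fun F => if cond (fun _ => false) F then f_mag F else 0) fs) = INR n.
Proof.
  intros Hfs Hb.
  rewrite <- rsum_one.
  rewrite (rsum_ext (fun _ => 1) (fun k => up_force fs k - down_force fs k)).
  2:{ intros k Hk. specialize (Hb k Hk). lra. }
  rewrite rsum_minus. unfold up_force, down_force.
  rewrite (rsum_exchange (fun k F => if Nat.eqb (f_up F) k then f_mag F else 0)).
  rewrite (rsum_exchange (fun k F => match f_down F with
                      | Some j => if Nat.eqb j k then f_mag F else 0
                      | None => 0 end)).
  rewrite <- sumR_map_minus. symmetry. apply sumR_map_ext. intros F HF.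
  destruct (Hfs F HF) as [Hu Hd].
  rewrite rsum_ind by exact Hu.
  unfold cond, down_in. simpl.
  destruct (f_down F) as [j|] eqn:Ed.
  - rewrite rsum_ind by exact Hd. simpl. lra.
  - simpl. replace (rsum (fun _ => 0) n) with 0. lra.
    clear. induction n; simpl; [reflexivity| rewrite <- IHn; lra].
Qed.

Theorem mainTheorem7 (h : R) (n : nat) (x y : nat -> R) (d : R) :
  0 < h -> (1 <= n)%nat ->
  is_stack h n x y -> balanced h n x y -> is_overhang n x d ->
  exists (mu : meas) (ms : list move) (mu' : meas),
    is_dist mu /\
    moment 0 mu = INR n /\
    mu_of (fun t => Rleb t 0) mu = INR n /\
    mu_of (fun t => Rltb 0 t) mu = 0 /\
    (length ms <= n - 1)%nat /\
    lossy_seq ms mu mu' /\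
    1 <= mu_of (fun t => Rleb (d - 1) t) mu'.
Proof.
  intros hpos Hn _ [fs [Hfs Hbal]] [[k [Hk Hkd]] _].
  set (C := filter (fun j => if Rlt_dec (y j) (y k) then true else false) (seq 0 n)).
  set (L := isort y C).
  set (S0 := fun _ : nat => false).
  assert (HinC : forall j, In j C <-> (j < n)%nat /\ y j < y k).
  { intros j. unfold C. rewrite filter_In, in_seq.
    destruct (Rlt_dec (y j) (y k)); split; intros; try tauto; try lia.
  }
  assert (HinL : forall j, In j L <-> In j C).
  { intros j. split; apply Permutation_in; [apply Permutation_sym|]; apply isort_perm. }
  assert (Hpos : forall F, In F fs -> 0 <= f_mag F).
  { intros F HF. apply (Hfs F HF). }
  assert (Hne : forall F, In F fs -> f_down F <> Some (f_up F)).
  { intros F HF E. destruct (Hfs F HF) as [_ [_ [Hr _]]]. rewrite E in Hr.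
    simpl in Hr. lra. }
  assert (Hg : good fs S0 L).
  { apply (good_intro fs h x y n hpos).
    - intros F HF. destruct (Hfs F HF) as [H1 [H2 [H3 _]]]. auto.
    - apply (Permutation_NoDup (isort_perm y C)). unfold C.
      apply NoDup_filter. apply seq_NoDup.
    - apply isort_sorted.
    - intros; reflexivity.
    - intros j i Hj Hi Hy. right. apply HinL. apply HinL in Hi. apply HinC in Hi.
      apply HinC. split; [exact Hj| lra].
    - intros u i Hu. discriminate. }
  assert (Hv : forall i, In i L -> valid_move (mv fs x i)).
  { intros i Hi. apply HinL, HinC in Hi. destruct (Hbal i (proj1 Hi)) as [B1 B2].
    apply valid_mv; auto. intros F HF. apply (Hfs F HF). }
  destruct (iterate fs x Hpos Hne L S0 (Dm fs S0) Hg Hv (fun A => eq_refl)) as [mu' [Hseq Hmu']].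
  exists (Dm fs S0), (map (mv fs x) L), mu'.
  assert (Hcontact0 : forall F, In F fs -> cond S0 F = true -> f_pos F <= 0).
  { intros F HF Hc. unfold cond, down_in, S0 in Hc. destruct (Hfs F HF) as [_ [_ [_ [Hic _]]]].
    unfold in_contact in Hic. destruct (f_down F); [discriminate| tauto]. }
  assert (Htab : sumR (map (fun F => if cond S0 F then f_mag F else 0) fs) = INR n).
  { apply table_total; [|intros; apply Hbal; auto]. intros F HF.
    destruct (Hfs F HF) as [H1 [H2 _]]. auto. }
  split; [|split; [|split; [|split; [|split]]]].
  - intros p. apply dist_Dm. exact Hpos.
  - unfold moment, Dm. rewrite map_map. simpl. rewrite <- Htab.
    apply sumR_map_ext. intros F _. ring.
  - rewrite mu_of_Dm, <- Htab. apply sumR_map_ext. intros F HF.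
    destruct (cond S0 F) eqn:Ec; [|destruct (Rleb (f_pos F) 0); reflexivity].
    specialize (Hcontact0 F HF Ec). unfold Rleb. destruct (Rle_dec (f_pos F) 0); [reflexivity|lra].
  - rewrite mu_of_Dm. transitivity (sumR (map (fun _ : force => 0) fs)); [|apply sumR_map_zero].
    apply sumR_map_ext. intros F HF.
    destruct (cond S0 F) eqn:Ec; [|destruct (Rltb 0 (f_pos F)); reflexivity].
    specialize (Hcontact0 F HF Ec). unfold Rltb. destruct (Rlt_dec 0 (f_pos F)); [lra|reflexivity].
  - rewrite length_map. unfold L. rewrite <- (Permutation_length (isort_perm y C)).
    unfold C. pose proof (filter_len_lt (fun j => if Rlt_dec (y j) (y k) then true else false)
       (seq 0 n) k) as Hl. rewrite length_seq in Hl.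
    assert (Hl' : (length (filter (fun j => if Rlt_dec (y j) (y k) then true else false) (seq 0 n)) < n)%nat).
    { apply Hl. apply in_seq. lia. destruct (Rlt_dec (y k) (y k)); [lra|reflexivity]. }
    lia.
  - split; [exact Hseq|].
    rewrite Hmu', mu_of_Dm.
    destruct (Hbal k Hk) as [B1 _].
    assert (Hdn : 0 <= down_force fs k).
    { unfold down_force. apply sumR_map_nonneg. intros F HF. specialize (Hpos F HF).
      destruct (f_down F); [destruct (Nat.eqb n0 k)|]; lra. }
    assert (Hup : 1 <= up_force fs k) by lra.
    eapply Rle_trans; [exact Hup|]. unfold up_force. apply sumR_map_le.
    intros F HF. specialize (Hpos F HF).
    destruct (Nat.eqb (f_up F) k) eqn:Eu.
    + apply Nat.eqb_eq in Eu.
      destruct (Hfs F HF) as [_ [Hj [Hr [Hic _]]]].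
      assert (Hc : cond (addall L S0) F = true).
      { unfold cond, down_in. rewrite Eu.
        rewrite (addall_notin L S0 k).
        - destruct (f_down F) as [j|] eqn:Ed; [|reflexivity].
          rewrite Bool.andb_true_r. apply addall_in. apply HinL, HinC.
          simpl in Hr. rewrite Eu in Hr. split; [exact Hj| lra].
        - intros H. apply HinL, HinC in H. lra.
        - reflexivity. }
      rewrite Hc. destruct Hic as [[Hx _] _]. rewrite Eu in Hx.
      unfold Rleb. destruct (Rle_dec (d - 1) (f_pos F)); [lra| lra].
    + destruct (Rleb (d - 1) (f_pos F)); [destruct (cond (addall L S0) F)|]; lra.
Qed.
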